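(* Let $d\geq1$, $T\geq2$, and let $x^0,x^1\in(\mathbb{R}^d)^T$ satisfy $x^0_{t,j}\neq x^1_{t,j}$ for all $1\le t\le T$, $1\le j\le d$. Let $D:=\prod_{t=1}^T\prod_{j=1}^d\{x^0_{t,j},x^1_{t,j}\}\subseteq(\mathbb{R}^d)^T$. Let $V,V^{(n)}:D\to\mathbb{R}$, $n\in\mathbb{N}$, and real-valued functions $\hat h_{t,j},\hat g_j$ and $\hat h^{(n)}_{t,j},\hat g^{(n)}_j$ be such that for all $x=(x_{t,j})\in D$, $V(x)=\sum_{t=1}^{T-1}\sum_{j=1}^d\hat h_{t,j}(x_1,\dots,x_t)(x_{t+1,j}-x_{t,j})+\sum_{j=1}^d\hat g_j(x_{T,j})$, and similarly for $V^{(n)}$ with $\hat h^{(n)}_{t,j},\hat g^{(n)}_j$, and such that $\hat g_j(x^0_{T,j})=\hat g^{(n)}_j(x^0_{T,j})=0$ for $j=2,\dots,d$ and all $n$. Then the values $\hat h_{t,j}(x_1,\dots,x_t)$ and $\hat g_j(x_{T,j})$ for $x\in D$ are uniquely determined by $V$. Moreover, if $V^{(n)}\to V$ pointwise on $D$, then $\hat h^{(n)}_{t,j}(x_1,\dots,x_t)\to\hat h_{t,j}(x_1,\dots,x_t)$ and $\hat g^{(n)}_j(x_{T,j})\to\hat g_j(x_{T,j})$ for all $x\in D$ and all $t,j$.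
   Context: Here $x_t=(x_{t,1},\dots,x_{t,d})\in\mathbb{R}^d$ denotes the $t$-th block of $x\in(\mathbb{R}^d)^T$. *)

(* Defs.v *)
From HB Require Import structures.
From mathcomp Require Import all_boot all_order all_algebra.
From mathcomp Require Import all_classical all_reals topology normedtype sequences.
Set Implicit Arguments. Unset Strict Implicit. Unset Printing Implicit Defensive.
Import Order.TTheory GRing.Theory Num.Theory.
Local Open Scope ring_scope.

(* Time blocks are indexed by 'I_T.-1.+1 (= 'I_T when T >= 1); block t (0-based)
   is the paper's block t+1, so ord_max is the paper's block T. *)
Definition pt (R : Type) (d T : nat) := 'I_T.-1.+1 -> 'I_d -> R.

Definition inD (R : Type) (d T : nat) (x0 x1 x : pt R d T) : Prop :=
  forall t j, x t j = x0 t j \/ x t j = x1 t j.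

(* (x_1, ..., x_{t+1}) for 0-based t : 'I_T.-1 (paper's (x_1,...,x_t), t = 1..T-1) *)
Definition hist (R : Type) (d T : nat) (t : 'I_T.-1) (x : pt R d T)
  : 'I_t.+1 -> 'I_d -> R :=
  fun s j => x (widen_ord (leqW (ltn_ord t)) s) j.

Arguments hist {R d T} t x _ _.

Definition hfun (R : Type) (d T : nat) :=
  forall t : 'I_T.-1, 'I_d -> ('I_t.+1 -> 'I_d -> R) -> R.

Definition represents (R : pzRingType) (d T : nat) (x0 x1 : pt R d T)
  (V : pt R d T -> R) (h : hfun R d T) (g : 'I_d -> R -> R) : Prop :=
  forall x, inD x0 x1 x ->
    V x = \sum_(t < T.-1) \sum_(j < d)
            h t j (hist t x) * (x (lift ord0 t) j - x (widen_ord (leqnSn _) t) j)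
          + \sum_(j < d) g j (x ord_max j).

(* g_j(x0_{T,j}) = 0 for j = 2..d (0-based: j > 0) *)
Definition normalized (R : pzRingType) (d T : nat) (x0 : pt R d T)
  (g : 'I_d -> R -> R) : Prop :=
  forall j : 'I_d, (0 < (j : nat))%N -> g j (x0 ord_max j) = 0.

(* Main.v *)
Require Import Defs.
From HB Require Import structures.
From mathcomp Require Import all_boot all_order all_algebra.
From mathcomp Require Import all_classical all_reals topology normedtype sequences.
From mathcomp Require Import zify ring lra.
Import Order.TTheory GRing.Theory Num.Theory.
Import numFieldNormedType.Exports.
Local Open Scope classical_set_scope.
Local Open Scope ring_scope.
Set Implicit Arguments. Unset Strict Implicit.

Record Zpred (R : realType) (Z : (nat -> R) -> Prop) := {
  Zext : forall u v, (forall n, u n = v n) -> Z u -> Z v;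
  Z0 : Z (fun _ => 0);
  ZD : forall u v, Z u -> Z v -> Z (fun n => u n + v n);
  ZN : forall u, Z u -> Z (fun n => - u n);
  ZM : forall c u, Z u -> Z (fun n => c * u n) }.

Lemma ZB (R : realType) Z (zp : @Zpred R Z) u v : Z u -> Z v -> Z (fun n => u n - v n).
Proof. move=> zu zv; exact: (ZD zp zu (ZN zp zv)). Qed.

Lemma Zsum (R : realType) Z (zp : @Zpred R Z) (I : Type) (r : seq I) (P : pred I)
  (F : I -> nat -> R) : (forall i, P i -> Z (F i)) -> Z (fun n => \sum_(i <- r | P i) F i n).
Proof.
move=> hF; elim: r => [|a r IH].
  by apply: (Zext zp _ (Z0 zp)) => n; rewrite big_nil.
case Pa: (P a).
  by apply: (Zext zp _ (ZD zp (hF a Pa) IH)) => n; rewrite big_cons Pa.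
by apply: (Zext zp _ IH) => n; rewrite big_cons Pa.
Qed.

Definition upd (R : Type) d T (x : pt R d T) (s : 'I_T.-1.+1) (j : 'I_d) (v : R) : pt R d T :=
  fun t i => if (t == s) && (i == j) then v else x t i.

Lemma inD_upd (R : Type) d T (x0 x1 x : pt R d T) s j (b : bool) :
  inD x0 x1 x -> inD x0 x1 (upd x s j (if b then x1 s j else x0 s j)).
Proof.
move=> hx t i; rewrite /upd; case: ifP => [/andP[/eqP-> /eqP->]|_]; last exact: hx.
by case: b; [right|left].
Qed.

Lemma val_lift0 n (t : 'I_n) : val (lift ord0 t) = t.+1.
Proof. by rewrite /= /bump leq0n. Qed.

Lemma hist_upd (R : Type) d T (t : 'I_T.-1) (x : pt R d T) (s : 'I_T.-1.+1) (j : 'I_d) (v : R) :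
  (t < s)%N -> hist t (upd x s j v) = hist t x.
Proof.
move=> ts; rewrite /hist /upd; apply: funext => s'; apply: funext => i.
have -> : (widen_ord (leqW (ltn_ord t)) s' == s) = false.
  apply/negbTE/eqP => /(congr1 val) /=; have := ltn_ord s'; lia.
by [].
Qed.

Lemma sum_upd_diff (R : realType) d (F : 'I_d -> R -> R) (y : 'I_d -> R) j a b :
  \sum_i F i (if i == j then a else y i) - \sum_i F i (if i == j then b else y i)
  = F j a - F j b.
Proof.
rewrite -sumrB (bigD1 j) //= !eqxx big1 ?addr0 // => i /negbTE ->; exact: subrr.
Qed.

Definition Kc (R : realType) d T (x0 x1 : pt R d T) (G : nat -> 'I_d -> R -> R) n j :=
  (G n j (x0 ord_max j) - G n j (x1 ord_max j)) / (x1 ord_max j - x0 ord_max j).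
Definition Ac (R : realType) d T (x0 x1 : pt R d T) (G : nat -> 'I_d -> R -> R) n j :=
  G n j (x0 ord_max j) + Kc x0 x1 G n j * x0 ord_max j.
Definition Dl (R : realType) d T (x : pt R d T) (t : 'I_T.-1) j :=
  x (lift ord0 t) j - x (widen_ord (leqnSn _) t) j.
Definition Tail (R : realType) d T (x0 x1 : pt R d T) (H : nat -> hfun R d T)
  (G : nat -> 'I_d -> R -> R) n x m :=
  \sum_(t < T.-1 | (m <= t)%N) \sum_(j < d) (H n t j (hist t x) - Kc x0 x1 G n j) * Dl x t j.
Definition Pre (R : realType) d T (H : nat -> hfun R d T) n (x : pt R d T) m :=
  \sum_(t < T.-1 | (t < m)%N) \sum_(j < d) H n t j (hist t x) * Dl x t j.

Lemma g_affine (R : realType) d T (x0 x1 : pt R d T) (hx : forall t j, x0 t j != x1 t j)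
  (G : nat -> 'I_d -> R -> R) n j x : inD x0 x1 x ->
  G n j (x ord_max j) = Ac x0 x1 G n j - Kc x0 x1 G n j * x ord_max j.
Proof.
move=> hD; rewrite /Ac /Kc.
have nz : x1 ord_max j - x0 ord_max j != 0 by rewrite subr_eq0 eq_sym.
case: (hD ord_max j) => ->; first by ring.
by field.
Qed.

Lemma tele (R : realType) d T (x : pt R d T) j m : (m <= T.-1)%N ->
  \sum_(t < T.-1 | (m <= t)%N) Dl x t j = x ord_max j - x (inord m) j.
Proof.
move=> hm.
pose f := fun k : nat => x (inord k) j.
have E : forall t : 'I_T.-1, Dl x t j = f t.+1 - f t.
  move=> t; rewrite /Dl /f; congr (x _ j - x _ j); apply: val_inj.
    by rewrite val_lift0 /= inordK // ltnS.
  by rewrite /= inordK // ltnW // ltnS.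
rewrite (eq_bigr _ (fun t _ => E t)).
rewrite (eq_bigl (fun i : 'I_T.-1 => xpredT i && (m <= i)%N)) //.
rewrite -(big_geq_mkord m T.-1 xpredT (fun k => f k.+1 - f k)).
rewrite telescope_sumr //.
rewrite /f; congr (x _ j - _); apply: val_inj; by rewrite /= inordK.
Qed.

Lemma Id_tail (R : realType) d T (x0 x1 : pt R d T) (hx : forall t j, x0 t j != x1 t j)
  (W : nat -> pt R d T -> R) (H : nat -> hfun R d T) (G : nat -> 'I_d -> R -> R) n x m :
  represents x0 x1 (W n) (H n) (G n) -> inD x0 x1 x -> (m <= T.-1)%N ->
  W n x = Pre H n x m + \sum_(j < d) (Ac x0 x1 G n j - Kc x0 x1 G n j * x (inord m) j)
          + Tail x0 x1 H G n x m.
Proof.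
move=> rep hD hm; rewrite (rep x hD).
rewrite (bigID (fun t : 'I_T.-1 => (m <= t)%N)) /=.
have -> : forall F : 'I_T.-1 -> R, \sum_(t < T.-1 | ~~ (m <= t)%N) F t
    = \sum_(t < T.-1 | (t < m)%N) F t.
  by move=> F; apply: eq_bigl => t; rewrite ltnNge.
have E1 : Tail x0 x1 H G n x m =
   \sum_(t < T.-1 | (m <= t)%N) \sum_(j < d) H n t j (hist t x) * Dl x t j
   - \sum_(j < d) Kc x0 x1 G n j * (x ord_max j - x (inord m) j).
  rewrite /Tail.
  under eq_bigr do under eq_bigr do rewrite mulrBl.
  under eq_bigr do rewrite sumrB.
  rewrite sumrB; congr (_ - _).
  rewrite exchange_big /=; apply: eq_bigr => j _.
  by rewrite -tele // mulr_sumr.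
have E2 : \sum_(j < d) (Ac x0 x1 G n j - Kc x0 x1 G n j * x ord_max j) =
   \sum_(j < d) (Ac x0 x1 G n j - Kc x0 x1 G n j * x (inord m) j)
   - \sum_(j < d) Kc x0 x1 G n j * (x ord_max j - x (inord m) j).
  by rewrite -sumrB; apply: eq_bigr => j _; ring.
rewrite (eq_bigr _ (fun j _ => g_affine hx G n j hD)) E1 E2 /Pre /Dl.
ring.
Qed.

Lemma split_tail (R : realType) d T (x0 x1 : pt R d T) (H : nat -> hfun R d T)
  (G : nat -> 'I_d -> R -> R) n x (t : 'I_T.-1) :
  Tail x0 x1 H G n x t = \sum_(j < d) (H n t j (hist t x) - Kc x0 x1 G n j) * Dl x t j
     + Tail x0 x1 H G n x t.+1.
Proof.
rewrite /Tail (bigD1 t) //=; congr (_ + _).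
apply: eq_bigl => t'; rewrite [in RHS]ltn_neqAle andbC; congr (_ && _).
by rewrite eq_sym.
Qed.

Lemma Pre_upd (R : realType) d T (H : nat -> hfun R d T) n (x : pt R d T) m (s : 'I_T.-1.+1) (j : 'I_d) (v : R) :
  (m < s)%N -> Pre H n (upd x s j v) m = Pre H n x m.
Proof.
move=> ms; apply: eq_bigr => t /= ht; rewrite hist_upd; last by lia.
apply: eq_bigr => i _; rewrite /Dl /upd.
have -> : (lift ord0 t == s) = false.
  by apply/negbTE/eqP => /(congr1 val); rewrite val_lift0 /=; lia.
have -> : (widen_ord (leqnSn T.-1) t == s) = false.
  by apply/negbTE/eqP => /(congr1 val) /=; lia.
by [].
Qed.

Lemma Tail_small (R : realType) d T (x0 x1 : pt R d T) (H : nat -> hfun R d T)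
  (G : nat -> 'I_d -> R -> R) Z (zp : @Zpred R Z) m :
  (forall t : 'I_T.-1, (m <= t)%N -> forall j x, inD x0 x1 x ->
      Z (fun n => H n t j (hist t x) - Kc x0 x1 G n j)) ->
  forall x, inD x0 x1 x -> Z (fun n => Tail x0 x1 H G n x m).
Proof.
move=> Q x hD; apply: (Zsum zp) => t ht; apply: (Zsum zp) => j _.
apply: (Zext zp _ (ZM zp (Dl x t j) (Q t ht j x hD))) => n; exact: mulrC.
Qed.

Lemma step (R : realType) d T (x0 x1 : pt R d T) (hx : forall t j, x0 t j != x1 t j)
  (W : nat -> pt R d T -> R) (H : nat -> hfun R d T) (G : nat -> 'I_d -> R -> R)
  Z (zp : @Zpred R Z) m :
  (forall n, represents x0 x1 (W n) (H n) (G n)) ->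
  (forall x, inD x0 x1 x -> Z (fun n => W n x)) ->
  (forall t : 'I_T.-1, (m.+1 <= t)%N -> forall j x, inD x0 x1 x ->
      Z (fun n => H n t j (hist t x) - Kc x0 x1 G n j)) ->
  (forall t : 'I_T.-1, (m <= t)%N -> forall j x, inD x0 x1 x ->
      Z (fun n => H n t j (hist t x) - Kc x0 x1 G n j)).
Proof.
move=> rep hW Q1 t ht j x hD.
case: (ltngtP m t) => hmt; first exact: Q1; first by rewrite leqNgt hmt in ht.
subst m.
set s : 'I_T.-1.+1 := lift ord0 t.
pose vb (b : bool) := if b then x1 s j else x0 s j.
pose xb b := upd x s j (vb b).
have hDb b : inD x0 x1 (xb b) by apply: inD_upd.
pose F n i v := (H n t i (hist t x) - Kc x0 x1 G n i) * (v - x (widen_ord (leqnSn _) t) i).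
have hs : val s = t.+1 by rewrite val_lift0.
have Idb b n : W n (xb b) = Pre H n x t
    + \sum_(i < d) (Ac x0 x1 G n i - Kc x0 x1 G n i * x (inord t) i)
    + (\sum_(i < d) F n i (if i == j then vb b else x s i) + Tail x0 x1 H G n (xb b) t.+1).
  rewrite -(Pre_upd H n x (m:=t) (s:=s) j (vb b)); last by rewrite hs.
  rewrite (Id_tail hx (m:=t) (rep n) (hDb b)); last exact: ltnW.
  rewrite split_tail; congr (_ + _ + (_ + _)).
    apply: eq_bigr => i _; rewrite /xb /upd.
    have -> : (inord t == s) = false.
      apply/negbTE/eqP => /(congr1 val); rewrite hs /= inordK; first lia.
      by apply: leqW.
    by [].
  apply: eq_bigr => i _; rewrite /F hist_upd; last by rewrite hs.
  rewrite /Dl /xb /upd eqxx /=.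
  have -> : (widen_ord (leqnSn T.-1) t == s) = false.
    by apply/negbTE/eqP => /(congr1 val); rewrite hs /=; lia.
  by [].
have key n : (x1 s j - x0 s j) * (H n t j (hist t x) - Kc x0 x1 G n j) =
   (W n (xb true) - W n (xb false)) - (Tail x0 x1 H G n (xb true) t.+1 - Tail x0 x1 H G n (xb false) t.+1).
  rewrite !Idb.
  have D := sum_upd_diff (F n) (fun i => x s i) j (vb true) (vb false).
  move: (\sum_(i < d) F n i (if i == j then vb true else x s i))
        (\sum_(i < d) F n i (if i == j then vb false else x s i)) D => M1 M0 D.
  have -> : M1 = M0 + (F n j (vb true) - F n j (vb false)) by rewrite -D addrC subrK.
  rewrite /F /vb; ring.
have Zk : Z (fun n => (x1 s j - x0 s j) * (H n t j (hist t x) - Kc x0 x1 G n j)).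
  apply: (Zext zp (fun n => esym (key n))).
  apply: (ZB zp); apply: (ZB zp); try exact: hW.
    exact: (Tail_small zp Q1).
  exact: (Tail_small zp Q1).
have nz : x1 s j - x0 s j != 0 by rewrite subr_eq0 eq_sym.
apply: (Zext zp _ (ZM zp (x1 s j - x0 s j)^-1 Zk)) => n; by rewrite mulKf.
Qed.

Lemma allQ (R : realType) d T (x0 x1 : pt R d T) (hx : forall t j, x0 t j != x1 t j)
  (W : nat -> pt R d T -> R) (H : nat -> hfun R d T) (G : nat -> 'I_d -> R -> R)
  Z (zp : @Zpred R Z) :
  (forall n, represents x0 x1 (W n) (H n) (G n)) ->
  (forall x, inD x0 x1 x -> Z (fun n => W n x)) ->
  forall t : 'I_T.-1, forall j x, inD x0 x1 x ->
      Z (fun n => H n t j (hist t x) - Kc x0 x1 G n j).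
Proof.
move=> rep hW.
suff: forall k m, (m + k)%N = T.-1 -> forall t : 'I_T.-1, (m <= t)%N -> forall j x, inD x0 x1 x ->
      Z (fun n => H n t j (hist t x) - Kc x0 x1 G n j).
  by move=> S t; apply: (S T.-1 0%N) => //; rewrite add0n.
elim=> [|k IH] m hmk t ht.
  by move: (ltn_ord t) hmk ht; lia.
apply: (step (m:=m) hx zp rep hW) => //.
by apply: (IH m.+1); lia.
Qed.

Lemma Kzero (R : realType) d T (x0 x1 : pt R d T) (hx : forall t j, x0 t j != x1 t j)
  (W : nat -> pt R d T -> R) (H : nat -> hfun R d T) (G : nat -> 'I_d -> R -> R)
  Z (zp : @Zpred R Z) :
  (forall n, represents x0 x1 (W n) (H n) (G n)) ->
  (forall x, inD x0 x1 x -> Z (fun n => W n x)) ->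
  forall j, Z (fun n => Kc x0 x1 G n j).
Proof.
move=> rep hW j.
have Q0 := allQ hx zp rep hW.
set s : 'I_T.-1.+1 := ord0.
pose vb (b : bool) := if b then x1 s j else x0 s j.
pose xb b := upd x0 s j (vb b).
have hD0 : inD x0 x1 x0 by move=> t i; left.
have hDb b : inD x0 x1 (xb b) by apply: inD_upd.
pose F n i v := Ac x0 x1 G n i - Kc x0 x1 G n i * v.
have Idb b n : W n (xb b) =
    \sum_(i < d) F n i (if i == j then vb b else x0 s i) + Tail x0 x1 H G n (xb b) 0.
  rewrite (Id_tail hx (m:=0) (rep n) (hDb b)) //.
  rewrite /Pre big_pred0 ?add0r; last by move=> t.
  congr (_ + _); apply: eq_bigr => i _; rewrite /F /xb /upd.
  have -> : (inord 0 : 'I_T.-1.+1) = s by apply: val_inj; rewrite /= inordK.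
  by rewrite eqxx.
have key n : (x1 s j - x0 s j) * Kc x0 x1 G n j =
   (Tail x0 x1 H G n (xb true) 0 - Tail x0 x1 H G n (xb false) 0)
   - (W n (xb true) - W n (xb false)).
  rewrite !Idb.
  have D := sum_upd_diff (F n) (fun i => x0 s i) j (vb true) (vb false).
  move: (\sum_(i < d) F n i (if i == j then vb true else x0 s i))
        (\sum_(i < d) F n i (if i == j then vb false else x0 s i)) D => M1 M0 D.
  have -> : M1 = M0 + (F n j (vb true) - F n j (vb false)) by rewrite -D addrC subrK.
  rewrite /F /vb; ring.
have Zk : Z (fun n => (x1 s j - x0 s j) * Kc x0 x1 G n j).
  apply: (Zext zp (fun n => esym (key n))).
  apply: (ZB zp); last by apply: (ZB zp); exact: hW.
  by apply: (ZB zp); apply: (Tail_small zp) => // t _; apply: Q0.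
have nz : x1 s j - x0 s j != 0 by rewrite subr_eq0 eq_sym.
apply: (Zext zp _ (ZM zp (x1 s j - x0 s j)^-1 Zk)) => n; by rewrite mulKf.
Qed.

Lemma core (R : realType) d T (x0 x1 : pt R d T) (hx : forall t j, x0 t j != x1 t j)
  (W : nat -> pt R d T -> R) (H : nat -> hfun R d T) (G : nat -> 'I_d -> R -> R)
  Z (zp : @Zpred R Z) :
  (forall n, represents x0 x1 (W n) (H n) (G n)) ->
  (forall n, normalized x0 (G n)) ->
  (forall x, inD x0 x1 x -> Z (fun n => W n x)) ->
  forall x, inD x0 x1 x ->
    (forall t j, Z (fun n => H n t j (hist t x))) /\
    (forall j, Z (fun n => G n j (x ord_max j))).
Proof.
move=> rep nrm hW x hD.
have Q0 := allQ hx zp rep hW.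
have K0 := Kzero hx zp rep hW.
have hD0 : inD x0 x1 x0 by move=> t i; left.
split.
  move=> t j; apply: (Zext zp _ (ZD zp (Q0 t j x hD) (K0 j))) => n; exact: subrK.
have Aj : forall j : 'I_d, (0 < j)%N -> Z (fun n => Ac x0 x1 G n j).
  move=> j hj; apply: (Zext zp _ (ZM zp (x0 ord_max j) (K0 j))) => n.
  by rewrite /Ac (nrm n j hj) add0r mulrC.
have Asum : Z (fun n => \sum_(i < d) Ac x0 x1 G n i).
  have E n : \sum_(i < d) Ac x0 x1 G n i =
      W n x0 - Tail x0 x1 H G n x0 0 + \sum_(i < d) Kc x0 x1 G n i * x0 (inord 0) i.
    rewrite (Id_tail hx (m:=0) (rep n) hD0) //.
    have -> : Pre H n x0 0 = 0 by rewrite /Pre big_pred0.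
    rewrite sumrB; ring.
  apply: (Zext zp (fun n => esym (E n))).
  apply: (ZD zp); first apply: (ZB zp); first exact: hW.
    by apply: (Tail_small zp) => // t _; apply: Q0.
  apply: (Zsum zp) => i _; apply: (Zext zp _ (ZM zp (x0 (inord 0) i) (K0 i))) => n.
  exact: mulrC.
move=> j.
have Aj' : Z (fun n => Ac x0 x1 G n j).
  case: (posnP j) => [j0|jpos]; last exact: Aj.
  have E n : Ac x0 x1 G n j = \sum_(i < d) Ac x0 x1 G n i
      - \sum_(i < d | i != j) Ac x0 x1 G n i.
    by rewrite (bigD1 j) //= addrK.
  apply: (Zext zp (fun n => esym (E n))).
  apply: (ZB zp) => //; apply: (Zsum zp) => i hij.
  apply: Aj; rewrite lt0n; apply/negP => /eqP i0; move/negP: hij; apply; apply/eqP/val_inj.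
  by rewrite /= i0 j0.
have Kx : Z (fun n => Kc x0 x1 G n j * x ord_max j).
  apply: (Zext zp _ (ZM zp (x ord_max j) (K0 j))) => n; exact: mulrC.
apply: (Zext zp _ (ZB zp Aj' Kx)) => n; by rewrite (@g_affine _ _ _ x0 x1 hx G n j x hD).
Qed.

Lemma Zcvg (R : realType) : @Zpred R (fun u => u @ \oo --> (0:R)).
Proof.
split.
- by move=> u v /funext ->.
- exact: cvg_cst.
- move=> u v hu hv; rewrite -(addr0 (0:R)); exact: cvgD.
- move=> u hu; rewrite -oppr0; exact: cvgN.
- move=> c u hu; rewrite -(mulr0 c); apply: cvgMl_tmp; exact: hu.
Qed.

Theorem proposition3p2 (R : realType) (d T : nat) (hd : (1 <= d)%N) (hT : (2 <= T)%N)
  (x0 x1 : pt R d T) (hx : forall t j, x0 t j != x1 t j) :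
  (forall (V : pt R d T -> R) (h h' : hfun R d T) (g g' : 'I_d -> R -> R),
     represents x0 x1 V h g -> normalized x0 g ->
     represents x0 x1 V h' g' -> normalized x0 g' ->
     forall x, inD x0 x1 x ->
       (forall t j, h t j (hist t x) = h' t j (hist t x)) /\
       (forall j, g j (x ord_max j) = g' j (x ord_max j)))
  /\
  (forall (V : pt R d T -> R) (h : hfun R d T) (g : 'I_d -> R -> R)
          (Vn : nat -> pt R d T -> R) (hn : nat -> hfun R d T)
          (gn : nat -> 'I_d -> R -> R),
     represents x0 x1 V h g -> normalized x0 g ->
     (forall n, represents x0 x1 (Vn n) (hn n) (gn n)) ->
     (forall n, normalized x0 (gn n)) ->
     (forall x, inD x0 x1 x -> (fun n => Vn n x) @ \oo --> V x) ->
     forall x, inD x0 x1 x ->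
       (forall t j, (fun n => hn n t j (hist t x)) @ \oo --> h t j (hist t x)) /\
       (forall j, (fun n => gn n j (x ord_max j)) @ \oo --> g j (x ord_max j))).
Proof.
have P2 : forall (V : pt R d T -> R) (h : hfun R d T) (g : 'I_d -> R -> R)
          (Vn : nat -> pt R d T -> R) (hn : nat -> hfun R d T)
          (gn : nat -> 'I_d -> R -> R),
     represents x0 x1 V h g -> normalized x0 g ->
     (forall n, represents x0 x1 (Vn n) (hn n) (gn n)) ->
     (forall n, normalized x0 (gn n)) ->
     (forall x, inD x0 x1 x -> (fun n => Vn n x) @ \oo --> V x) ->
     forall x, inD x0 x1 x ->
       (forall t j, (fun n => hn n t j (hist t x)) @ \oo --> h t j (hist t x)) /\
       (forall j, (fun n => gn n j (x ord_max j)) @ \oo --> g j (x ord_max j)).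
  move=> V h g Vn hn gn rV nV rVn nVn cV x hD.
  have rep' : forall n, represents x0 x1 (fun y => Vn n y - V y)
      (fun t j p => hn n t j p - h t j p) (fun j v => gn n j v - g j v).
    move=> n y hy; rewrite /= (rVn n y hy) (rV y hy).
    rewrite opprD addrACA -!sumrB; congr (_ + _).
    by apply: eq_bigr => t _; rewrite -sumrB; apply: eq_bigr => j _; ring.
  have nrm' : forall n, normalized x0 (fun j v => gn n j v - g j v).
    by move=> n j hj; rewrite /= (nVn n j hj) (nV j hj) subrr.
  have W' : forall y, inD x0 x1 y -> (fun n => Vn n y - V y) @ \oo --> (0:R).
    by move=> y hy; apply/subr_cvg0; exact: cV.
  have [H1 G1] := @core R d T x0 x1 hx (fun n y => Vn n y - V y)
    (fun n t j p => hn n t j p - h t j p) (fun n j v => gn n j v - g j v) _ (Zcvg R)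
    rep' nrm' W' x hD.
  split => [t j|j]; apply/subr_cvg0; [exact: H1 | exact: G1].
split; last exact: P2.
move=> V h h' g g' r nr r' nr' x hD.
have [A B] := P2 V h g (fun _ => V) (fun _ => h') (fun _ => g') r nr
  (fun _ => r') (fun _ => nr') (fun y _ => cvg_cst _) x hD.
split => [t j|j].
  exact: (norm_cvg_unique (A t j) (cvg_cst _)).
exact: (norm_cvg_unique (B j) (cvg_cst _)).
Qed.
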